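(* Consider $N\ge3$ cells on a ring, with interconnection matrix $M\in\mathbb{R}^{N\times N}$ the circulant matrix with $[M]_{i,i\pm1 \bmod N}=\tfrac12$ and all other entries $0$, so that its eigenvalues are $\lambda_k(M)=\cos\frac{2\pi k}{N}\in[-1,1]$, $k=0,\dots,N-1$. The mutual inactivation Notch–Delta model is $$\dot N_i=\beta_N-\gamma N_i-\frac{N_iv_{D_i}}{k_t}-\frac{N_iD_i}{k_c},\quad \dot D_i=\bar\beta_D+u_i-\gamma D_i-\frac{D_iv_{N_i}}{k_t}-\frac{N_iD_i}{k_c},\quad \dot R_i=\beta_R\frac{(N_iv_{D_i})^n}{k_{RS}+(N_iv_{D_i})^n}-\gamma_RR_i,$$ with $(v_{N_i},v_{D_i})$ the $i$th block of $(M\otimes I_2)w$, $w_i=(N_i,D_i)$, and all parameters $\beta_N,\bar\beta_D,\gamma,\gamma_R,k_t,k_c,\beta_R,k_{RS},n$ positive. Let $(\bar N^*,\bar D^*,\bar R^* )$ with $\bar N^*,\bar D^*>0$ be a spatially homogeneous steady state for $u\equiv0$ (so $\bar v_N^*=\bar N^*$, $\bar v_D^*=\bar D^*$), and define $$A=\begin{pmatrix}-\gamma-\frac{\bar v_D^*}{k_t}-\frac{\bar D^*}{k_c}&-\frac{\bar N^*}{k_c}&0\\-\frac{\bar D^*}{k_c}&-\gamma-\frac{\bar v_N^*}{k_t}-\frac{\bar N^*}{k_c}&0\\ b_1&0&-\gamma_R\end{pmatrix},\quad B_v=\begin{pmatrix}0&-\frac{\bar N^*}{k_t}\\-\frac{\bar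 D^*}{k_t}&0\\0&b_2\end{pmatrix},\quad G=\begin{pmatrix}1&0&0\\0&1&0\end{pmatrix},$$ where $b_1=\beta_Rnk_{RS}\frac{(\bar v_D^* )^n(\bar N^* )^{n-1}}{(k_{RS}+(\bar N^*\bar v_D^* )^n)^2}$ and $b_2=\frac{\bar N^*}{\bar v_D^*}b_1$. Then for every $k=0,\dots,N-1$, all eigenvalues of $A+\lambda_k(M)B_vG$ have negative real part; i.e. the linearization about the homogeneous steady state is asymptotically stable.
   Context: $\otimes$ denotes the Kronecker product. $N_i,D_i,R_i$ are concentrations of Notch, Delta and a reporter in cell $i$; $v_{N_i},v_{D_i}$ are the average Notch and Delta of the two neighbors of cell $i$. *)

(* Defs.v *)
From mathcomp Require Import all_boot all_order all_algebra.
From mathcomp Require Import all_classical all_reals.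
From mathcomp Require Import exp trigo.
From mathcomp Require Import complex.
Set Implicit Arguments. Unset Strict Implicit. Unset Printing Implicit Defensive.
Import Order.TTheory GRing.Theory Num.Theory.
Local Open Scope ring_scope.

Section Defs.
Variable R : realType.

Definition mx33 (a11 a12 a13 a21 a22 a23 a31 a32 a33 : R) : 'M[R]_3 :=
  \matrix_(i < 3, j < 3)
    nth 0 (nth [::] [:: [:: a11; a12; a13]; [:: a21; a22; a23]; [:: a31; a32; a33]] i) j.
Definition mx32 (a11 a12 a21 a22 a31 a32 : R) : 'M[R]_(3, 2) :=
  \matrix_(i < 3, j < 2)
    nth 0 (nth [::] [:: [:: a11; a12]; [:: a21; a22]; [:: a31; a32]] i) j.
Definition mx23 (a11 a12 a13 a21 a22 a23 : R) : 'M[R]_(2, 3) :=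
  \matrix_(i < 2, j < 3)
    nth 0 (nth [::] [:: [:: a11; a12; a13]; [:: a21; a22; a23]] i) j.

(* k-th eigenvalue of the ring matrix M ([M]_{i,i+-1 mod N} = 1/2): cos(2 pi k / N) *)
Definition lambdaM (N k : nat) : R := cos (2 * pi * k%:R / N%:R).

Definition hill (betaR kRS n x : R) : R := betaR * powR x n / (kRS + powR x n).

(* linearization data at the homogeneous steady state : vN = Ns, vD = Ds *)
Definition b1 (betaR kRS n Ns Ds : R) : R :=
  betaR * n * kRS * (powR Ds n * powR Ns (n - 1)) / (kRS + powR (Ns * Ds) n) ^+ 2.
Definition b2 (betaR kRS n Ns Ds : R) : R := Ns / Ds * b1 betaR kRS n Ns Ds.

Definition Amat (gam gamR kt kc betaR kRS n Ns Ds : R) : 'M[R]_3 :=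
  mx33 (- gam - Ds / kt - Ds / kc) (- (Ns / kc)) 0
       (- (Ds / kc)) (- gam - Ns / kt - Ns / kc) 0
       (b1 betaR kRS n Ns Ds) 0 (- gamR).
Definition Bv (kt betaR kRS n Ns Ds : R) : 'M[R]_(3, 2) :=
  mx32 0 (- (Ns / kt))
       (- (Ds / kt)) 0
       0 (b2 betaR kRS n Ns Ds).
Definition Gmat : 'M[R]_(2, 3) := mx23 1 0 0 0 1 0.

Definition complex_eigenvalue (m : nat) (A : 'M[R]_m) (z : R[i]) : Prop :=
  eigenvalue (map_mx (fun x : R => (x%:C)%C) A) z.
End Defs.

(* Main.v *)
Require Import Defs.
From mathcomp Require Import all_boot all_order all_algebra.
From mathcomp Require Import all_classical all_reals.
From mathcomp Require Import exp trigo.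
From mathcomp Require Import complex.
From mathcomp Require Import ring lra.
Import Order.TTheory GRing.Theory Num.Theory.
Local Open Scope ring_scope.
Lemma quad (R : rcfType) (t d x y : R) : t < 0 -> 0 < d ->
  ((x +i* y)%C * (x +i* y)%C - (t%:C)%C * (x +i* y)%C + (d%:C)%C = 0) -> x < 0.
Proof.
move=> ht hd; simpc. move=> [] e1 e2.
rewrite ltNge; apply/negP => hx.
have hy : y = 0.
  have : y * (2 * x - t) = 0 by rewrite -e2; ring.
  move/eqP; rewrite mulf_eq0 => /orP[/eqP //|]; lra.
subst y; nra.
Qed.

Lemma key (R : rcfType) (a11 a12 a21 a22 p q g : R) (v0 v1 v2 z : R[i]) :
 v0 * (a11%:C)%C + v1 * (a21%:C)%C + v2 * (p%:C)%C = z * v0 ->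
 v0 * (a12%:C)%C + v1 * (a22%:C)%C + v2 * (q%:C)%C = z * v1 ->
 v2 * (g%:C)%C = z * v2 ->
 a11 + a22 < 0 -> 0 < a11 * a22 - a12 * a21 -> g < 0 ->
 ~ (v0 = 0 /\ v1 = 0 /\ v2 = 0) -> complex.Re z < 0.
Proof.
move=> e0 e1 e2 ht hd hg hv.
have [v20|v2n0] := eqVneq v2 0; last first.
  have : z = (g%:C)%C by apply: (mulIf v2n0); rewrite -e2 mulrC.
  by move=> ->.
subst v2; rewrite mul0r addr0 in e0; rewrite mul0r addr0 in e1.
set D := ((a11%:C)%C - z) * ((a22%:C)%C - z) - (a12%:C)%C * (a21%:C)%C.
have h0 : v0 * D = 0.
  rewrite /D -[LHS]/(v0 * (((a11%:C)%C - z) * ((a22%:C)%C - z) - (a12%:C)%C * (a21%:C)%C)).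
  have -> : v0 * (((a11%:C)%C - z) * ((a22%:C)%C - z) - (a12%:C)%C * (a21%:C)%C)
    = ((a22%:C)%C - z) * (v0 * (a11%:C)%C + v1 * (a21%:C)%C - z * v0)
      - (a21%:C)%C * (v0 * (a12%:C)%C + v1 * (a22%:C)%C - z * v1) by ring.
  by rewrite e0 e1 !subrr !mulr0 subrr.
have h1 : v1 * D = 0.
  have -> : v1 * D
    = ((a11%:C)%C - z) * (v0 * (a12%:C)%C + v1 * (a22%:C)%C - z * v1)
      - (a12%:C)%C * (v0 * (a11%:C)%C + v1 * (a21%:C)%C - z * v0) by rewrite /D; ring.
  by rewrite e0 e1 !subrr !mulr0 subrr.
have D0 : D = 0.
  apply/eqP; apply/negPn/negP => Dn0.
  apply: hv; split; last split => //.
    by apply/eqP; move/eqP: h0; rewrite mulf_eq0 (negbTE Dn0) orbF.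
  by apply/eqP; move/eqP: h1; rewrite mulf_eq0 (negbTE Dn0) orbF.
have : z * z - ((a11 + a22)%:C)%C * z + ((a11 * a22 - a12 * a21)%:C)%C = 0.
  rewrite -D0 /D !(rmorphD, rmorphM, rmorphN, rmorphB) /=; ring.
case: z {e0 e1 e2 h0 h1 D D0} => x y /=.
exact: quad.
Qed.

Lemma sum3 (T : nmodType) (f : 'I_3 -> T) : \sum_i f i = f 0 + f 1 + f 2%:R.
Proof. rewrite !big_ord_recr big_ord0 /=; rewrite add0r; congr (f _ + f _ + f _); exact/val_inj. Qed.
Lemma sum2 (T : nmodType) (f : 'I_2 -> T) : \sum_i f i = f 0 + f 1.
Proof. rewrite !big_ord_recr big_ord0 /=; rewrite add0r; congr (f _ + f _); exact/val_inj. Qed.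
Theorem mainTheorem5 (R : realType) (N : nat) (hN : (3 <= N)%N)
  (betaN betaD gam gamR kt kc betaR kRS n : R)
  (hbN : 0 < betaN) (hbD : 0 < betaD) (hg : 0 < gam) (hgR : 0 < gamR)
  (hkt : 0 < kt) (hkc : 0 < kc) (hbR : 0 < betaR) (hkRS : 0 < kRS) (hn : 0 < n)
  (Ns Ds Rs : R) (hNs : 0 < Ns) (hDs : 0 < Ds)
  (eqN : betaN - gam * Ns - Ns * Ds / kt - Ns * Ds / kc = 0)
  (eqD : betaD - gam * Ds - Ds * Ns / kt - Ns * Ds / kc = 0)
  (eqR : hill betaR kRS n (Ns * Ds) - gamR * Rs = 0) :
  forall k : 'I_N, forall z : R[i],
    complex_eigenvalue
      (Amat gam gamR kt kc betaR kRS n Ns Ds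
        + lambdaM R N k *: (Bv kt betaR kRS n Ns Ds *m Gmat R)) z ->
    complex.Re z < 0.
Proof.
move=> k z /eigenvalueP [v Hv vn0].
have hl1 := cos_le1 (2 * pi * k%:R / N%:R : R).
have hl2 := cos_geN1 (2 * pi * k%:R / N%:R : R).
rewrite -/(lambdaM R N k) in hl1 hl2.
set l := lambdaM R N k in Hv hl1 hl2.
have E (j : 'I_3) := congr1 (fun m : 'M[R[i]]_(1,3) => m 0 j) Hv.
have E0 := E 0; have E1 := E 1; have E2 := E 2%:R.
move: E0 E1 E2; rewrite !mxE !sum3 !mxE !sum2 !mxE /=.
move=> e0 e1 e2.
rewrite !(mul0r, mulr0, add0r, addr0, mulr1) in e0 e1 e2.
apply: (@key _ _ _ _ _ _ _ _ _ _ _ _ e0 e1 e2).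
- have h1 : 0 < Ds / kt by apply: divr_gt0.
  have h2 : 0 < Ds / kc by apply: divr_gt0.
  have h3 : 0 < Ns / kt by apply: divr_gt0.
  have h4 : 0 < Ns / kc by apply: divr_gt0.
  lra.
- have h1 : 0 < Ds / kt by apply: divr_gt0.
  have h2 : 0 < Ds / kc by apply: divr_gt0.
  have h3 : 0 < Ns / kt by apply: divr_gt0.
  have h4 : 0 < Ns / kc by apply: divr_gt0.
  move: h1 h2 h3 h4; set u := Ds / kt; set w := Ds / kc; set u' := Ns / kt; set w' := Ns / kc.
  move=> h1 h2 h3 h4.
  have -> : (- gam - u - w) * (- gam - u' - w') - (- w' + l * - u') * (- w + l * - u)
    = gam * gam + gam * (u + w + u' + w') + u * u' * (1 - l * l) + (1 - l) * (u * w' + w * u') by ring.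
  have p1 : 0 <= u * u' * (1 - l * l) by apply: mulr_ge0; [apply: mulr_ge0; lra | nra].
  have p2 : 0 <= (1 - l) * (u * w' + w * u') by apply: mulr_ge0; [lra | apply: addr_ge0; apply: mulr_ge0; lra].
  have p3 : 0 < gam * gam by apply: mulr_gt0.
  have p4 : 0 <= gam * (u + w + u' + w') by apply: mulr_ge0; lra.
  lra.
- lra.
- case=> h0 [h1 h2]; move/negP: vn0; apply; apply/eqP/rowP => j; rewrite mxE.
  have := ltn_ord j; case: j => [[|[|[|m]]] hj] // _.
  + by rewrite (_ : Ordinal hj = 0) //; apply/val_inj.
  + by rewrite (_ : Ordinal hj = 1) //; apply/val_inj.
  + by rewrite (_ : Ordinal hj = 2%:R) //; apply/val_inj.
Qed.
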